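(* Let $\mathcal{H}=(V,E)$ be a hypergraph with $\emptyset\notin E$. Then $\mathcal{H}$ is threshold if and only if its split-incidence graph is connected-domishold.
   Context: A hypergraph $\mathcal{H}=(V,E)$ consists of a finite set $V$ and a set $E$ of subsets of $V$ (hyperedges). It is threshold if there exist $w:V\to\mathbb{R}_{\ge0}$ and $t\in\mathbb{R}_{\ge0}$ such that for all $X\subseteq V$, $\sum_{x\in X}w(x)\le t$ iff $X$ contains no hyperedge. The split-incidence graph of $\mathcal{H}$ is the graph with vertex set $V\cup E$ in which $V$ is a clique, $E$ is an independent set, and $v\in V$ is adjacent to $e\in E$ iff $v\in e$. A connected dominating set of a connected graph $G$ is a set $S\subseteq V(G)$ such that every vertex not in $S$ has a neighbor in $S$ and $G[S]$ is connected; $G$ is connected-domishold if there exist $w:V(G)\to\mathbb{R}_{\ge0}$, $t\in\mathbb{R}_{\ge0}$ such that for all $S\subseteq V(G)$, $\sum_{x\in S}w(x)\ge t$ iff $S$ is a connected dominating set. *)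

(* Defs.v *)
From HB Require Import structures.
From mathcomp Require Import all_boot.
From Stdlib Require Import Reals.
Set Implicit Arguments. Unset Strict Implicit. Unset Printing Implicit Defensive.

Open Scope R_scope.

Lemma Rplus_assoc' : associative Rplus.
Proof. by move=> a b c; rewrite Rplus_assoc. Qed.
HB.instance Definition _ := Monoid.isComLaw.Build R R0 Rplus
  Rplus_assoc' Rplus_comm Rplus_0_l.

Definition wsum (T : finType) (w : T -> R) (X : {set T}) : R :=
  \big[Rplus/R0]_(x in X) w x.

Definition contains_edge (V : finType) (E : {set {set V}}) (X : {set V}) : bool :=
  [exists e in E, e \subset X].

Definition threshold_hypergraph (V : finType) (E : {set {set V}}) : Prop :=
  exists (w : V -> R) (t : R),
    (forall x, 0 <= w x) /\ 0 <= t /\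
    forall X : {set V}, wsum w X <= t <-> ~~ contains_edge E X.

Definition dominating (T : finType) (adj : rel T) (S : {set T}) : bool :=
  [forall x, (x \notin S) ==> [exists y in S, adj x y]].

Definition induced_connected (T : finType) (adj : rel T) (S : {set T}) : bool :=
  [forall x in S, forall y in S,
     connect (fun a b => [&& a \in S, b \in S & adj a b]) x y].

Definition connected_dominating (T : finType) (adj : rel T) (S : {set T}) : bool :=
  dominating adj S && induced_connected adj S.

Definition connected_domishold (T : finType) (adj : rel T) : Prop :=
  exists (w : T -> R) (t : R),
    (forall x, 0 <= w x) /\ 0 <= t /\
    forall S : {set T}, t <= wsum w S <-> connected_dominating adj S.

Definition si_vertex (V : finType) (E : {set {set V}}) : finType :=
  (V + {e : {set V} | e \in E})%type.

Definition si_adj (V : finType) (E : {set {set V}}) : rel (si_vertex E) :=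
  fun a b =>
    match a, b with
    | inl u, inl v => u != v
    | inl v, inr e => v \in sval e
    | inr e, inl v => v \in sval e
    | inr _, inr _ => false
    end.

(* Main.v *)
Require Import Defs.
From mathcomp Require Import all_boot.
From Stdlib Require Import Reals Lra.
Set Implicit Arguments. Unset Strict Implicit. Unset Printing Implicit Defensive.

Section Helpers.
Variables (V : finType) (E : {set {set V}}).
Local Notation T := (si_vertex E).
Local Notation adj := (@si_adj V E).

Definition rS (S : {set T}) : rel T := fun a b => [&& a \in S, b \in S & adj a b].
Definition Aof (S : {set T}) : {set V} := [set v | (inl v : T) \in S].
Definition transv (A : {set V}) := forall e, e \in E -> exists2 v, v \in A & v \in e.

Lemma adjC a b : adj a b = adj b a.
Proof. by case: a => [u|e]; case: b => [v|f] //=; rewrite eq_sym. Qed.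

Lemma conn_adj (S : {set T}) a b : a \in S -> b \in S -> adj a b ->
  connect (rS S) a b && connect (rS S) b a.
Proof.
move=> Ha Hb Hab; apply/andP; split; apply: connect1; rewrite /rS Ha Hb //=.
by rewrite adjC.
Qed.

Lemma first_step (S : {set T}) x y : connect (rS S) x y -> x != y -> exists2 b, b \in S & adj x b.
Proof.
case/connectP=> [[|b p]] /=; first by move=> _ ->; rewrite eqxx.
by case/andP=> /and3P[_ Hb Hxb] _ _ _; exists b.
Qed.

Lemma icP (S : {set T}) : reflect (forall x y, x \in S -> y \in S -> connect (rS S) x y)
  (induced_connected adj S).
Proof.
apply: (iffP forallP) => [H x y Hx Hy | H x].
  by move: (H x); rewrite Hx /= => /forallP /(_ y); rewrite Hy.
by apply/implyP=> Hx; apply/forallP=> y; apply/implyP=> Hy; apply: H.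
Qed.

Lemma domP (S : {set T}) : reflect (forall x, x \notin S -> exists2 y, y \in S & adj x y)
  (dominating adj S).
Proof.
apply: (iffP forallP) => [H x Hx | H x].
  by move: (H x); rewrite Hx /= => /existsP [y /andP[]]; exists y.
apply/implyP=> Hx; have [y Hy Hxy] := H x Hx; by apply/existsP; exists y; rewrite Hy.
Qed.

Lemma Aof0 (S : {set T}) v : Aof S = set0 -> (inl v : T) \notin S.
Proof.
move=> HA; apply/negP=> Hv; have : v \in Aof S by rewrite inE.
by rewrite HA inE.
Qed.

Lemma cds_A (S : {set T}) a0 : a0 \in Aof S -> (connected_dominating adj S <-> transv (Aof S)).
Proof.
rewrite inE => Ha0; split.
  case/andP=> /domP Hd /icP Hc e He.
  have [HeS|HeS] := boolP ((inr (exist _ e He) : T) \in S).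
    have [[v|f] Hb Hv] := first_step (Hc _ _ HeS Ha0) isT => //.
    by exists v; rewrite ?inE.
  have [[v|f] Hy Hv] := Hd _ HeS => //.
  by exists v; rewrite ?inE.
move=> Ht; apply/andP; split.
  apply/domP => -[v|[e He]] Hx.
    exists (inl a0) => //=; apply/eqP=> Hva; by rewrite Hva Ha0 in Hx.
  have [v Hv Hve] := Ht e He; exists (inl v) => //; by rewrite inE in Hv.
have hv : forall v, (inl v : T) \in S ->
    connect (rS S) (inl v) (inl a0) && connect (rS S) (inl a0) (inl v).
  move=> v Hv; have [->|Hne] := eqVneq v a0; first by rewrite connect0.
  by apply: conn_adj.
have toa0 : forall x, x \in S -> connect (rS S) x (inl a0) && connect (rS S) (inl a0) x.
  move=> [v|[e He]] Hx; first exact: hv.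
  have [v Hv Hve] := Ht e He; rewrite inE in Hv.
  have /andP[h1 h2] := hv v Hv.
  have Ha : adj (inr (exist _ e He)) (inl v) by [].
  have /andP[h3 h4] := conn_adj Hx Hv Ha.
  by rewrite (connect_trans h3 h1) (connect_trans h2 h4).
apply/icP => x y Hx Hy; have /andP[h1 _] := toa0 x Hx.
have /andP[_ h2] := toa0 y Hy; exact: connect_trans h1 h2.
Qed.

Lemma A0_single (S : {set T}) x y : Aof S = set0 -> induced_connected adj S ->
  x \in S -> y \in S -> x = y.
Proof.
move=> HA /icP Hc Hx Hy; case: (eqVneq x y) => // Hne.
have [b Hb Hxb] := first_step (Hc _ _ Hx Hy) Hne.
case: x Hx Hxb {Hne Hc} => [u|f] Hx Hxb; first by move: (Aof0 u HA); rewrite Hx.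
case: b Hb Hxb => [v|g] Hb //= _; by move: (Aof0 v HA); rewrite Hb.
Qed.

Lemma wsum_split (w : T -> R) S : (forall f, w (inr f) = 0%R) ->
  wsum w S = wsum (fun v => w (inl v)) (Aof S).
Proof.
move=> H0; rewrite /wsum big_mkcond big_sumType /=.
rewrite [X in Rplus _ X]big1; last by move=> f _; rewrite H0; case: ifP.
rewrite Rplus_0_r [RHS]big_mkcond; apply: eq_bigr => v _; by rewrite inE.
Qed.

Definition SA (A : {set V}) : {set T} :=
  [set x : T | if x is inl v then v \in A else false].

Lemma Aof_SA A : Aof (SA A) = A.
Proof. by apply/setP => v; rewrite !inE. Qed.

Lemma wsum_SA (w : T -> R) A : wsum w (SA A) = wsum (fun v => w (inl v)) A.
Proof.
rewrite /wsum big_mkcond big_sumType /=.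
rewrite [X in Rplus _ X]big1; last by move=> f _; rewrite inE.
rewrite Rplus_0_r [RHS]big_mkcond; apply: eq_bigr => v _; by rewrite inE.
Qed.

Lemma noedge_transv A : ~~ contains_edge E (~: A) <-> transv A.
Proof.
split.
  move=> H e He; move: H; rewrite /contains_edge => /existsPn /(_ e).
  rewrite He /= => /subsetPn [v Hve]; rewrite inE negbK => HvA; by exists v.
move=> H; apply/existsPn => e; apply/negP => /andP [He Hsub].
have [v HvA Hve] := H e He; by move: (subsetP Hsub v Hve); rewrite inE HvA.
Qed.


Lemma triv_cds (S : {set T}) (v0 : V) : E \subset [set setT] ->
  (connected_dominating adj S <-> S != set0).
Proof.
move=> HE; have HeT : forall e, e \in E -> e = setT.
  by move=> e /(subsetP HE); rewrite inE => /eqP.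
split.
  case/andP=> /domP Hd _.
  case: (boolP ((inl v0 : T) \in S)) => [H|H]; first by apply/set0Pn; exists (inl v0).
  by have [y Hy _] := Hd _ H; apply/set0Pn; exists y.
case/set0Pn => x Hx.
case: (set_0Vmem (Aof S)) => [HA | [a0 Ha0]]; last first.
  by apply: (cds_A Ha0).2 => e He; exists a0 => //; rewrite (HeT _ He) inE.
have inr_eq : forall f g : {e | e \in E}, f = g.
  move=> [f Hf] [g Hg]; apply: val_inj => /=; by rewrite (HeT _ Hf) (HeT _ Hg).
have allinr : forall y : T, y \in S -> exists f, y = inr f.
  move=> [v|f] Hy; last by exists f.
  by move: (Aof0 v HA); rewrite Hy.
have [f Hxf] := allinr x Hx.
apply/andP; split.
  apply/domP => -[v|g] Hy.
    exists x => //; rewrite Hxf /=; case: f {Hxf} => e He /=.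
    by rewrite (HeT _ He) inE.
  by move: Hy; rewrite (inr_eq g f) -Hxf Hx.
apply/icP => a b Ha Hb.
have [fa ->] := allinr a Ha; have [fb ->] := allinr b Hb.
by rewrite (inr_eq fa fb) connect0.
Qed.

Lemma gen_cds (S : {set T}) e1 v1 : e1 \in E -> v1 \notin e1 ->
  (connected_dominating adj S <-> transv (Aof S)).
Proof.
move=> He1 Hv1.
case: (set_0Vmem (Aof S)) => [HA | [a0 Ha0]]; last exact: cds_A Ha0.
split; last first.
  by move=> Ht; have [v] := Ht e1 He1; rewrite HA inE.
case/andP=> /domP Hd Hc.
have [[v|f] Hy Hv] := Hd _ (Aof0 v1 HA); first by move: (Aof0 v HA); rewrite Hy.
case: (boolP ((inr (exist _ e1 He1) : T) \in S)) => H1.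
  have := A0_single HA Hc H1 Hy; case=> Hf; move: Hv; rewrite -Hf /=.
  by rewrite (negbTE Hv1).
have [[v|g] Hz Hg] := Hd _ H1 => //.
by move: (Aof0 v HA); rewrite Hz.
Qed.

End Helpers.

Lemma wsum_ge0 (U : finType) (w : U -> R) X : (forall x, 0 <= w x)%R -> (0 <= wsum w X)%R.
Proof.
move=> H; rewrite /wsum; apply: (big_ind (fun x => 0 <= x)%R); first lra.
  by move=> a b; lra.
by move=> i _; apply: H.
Qed.

Lemma wsum0 (U : finType) X : wsum (fun _ : U => 0%R) X = 0%R.
Proof. by rewrite /wsum big1. Qed.

Lemma wsum_compl (U : finType) (w : U -> R) X :
  wsum w setT = (wsum w X + wsum w (~: X))%R.
Proof. by rewrite /wsum (big_setID X) setTI setTD. Qed.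

Theorem mainTheorem6 (V : finType) (E : {set {set V}}) (hE : set0 \notin E) :
  threshold_hypergraph E <-> connected_domishold (@si_adj V E).
Proof.
split.
- move=> [w [t [Hw [Ht HX]]]].
  case: (boolP (E \subset [set setT])) => HEsub.
  + case: (pickP (fun v : V => true)) => [v0 _ | HV].
    * exists (fun _ => 1%R), 1%R; split; [move=> _; lra| split; [lra|]].
      move=> S; rewrite (triv_cds S v0 HEsub); split.
        move=> H; apply/negP => /eqP HS; move: H.
        by rewrite HS /wsum big_set0; lra.
      case/set0Pn=> x Hx; rewrite /wsum (bigD1 x) //=.
      rewrite -{1}(Rplus_0_r 1); apply: Rplus_le_compat_l.
      apply: (big_ind (fun x => 0 <= x)%R); [lra | move=> *; lra | move=> *; lra].
    * have noT : forall x : si_vertex E, False.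
        move=> [v|[e He]]; first by have := HV v.
        have HeT : e = setT by move: (subsetP HEsub e He); rewrite inE => /eqP.
        have He0 : e = set0 by apply/setP => v; have := HV v.
        by move: hE; rewrite -He0 He.
      exists (fun _ => 0%R), 0%R; split; [move=> _; lra| split; [lra|]].
      move=> S; rewrite wsum0; split=> _; last lra.
      apply/andP; split; [apply/domP | apply/icP] => x; case: (noT x).
  + have [e1 He1 He1T] := subsetPn HEsub; rewrite inE in He1T.
    have [v1 _ Hv1] : exists2 v, v \in setT & v \notin e1.
      by apply/subsetPn; rewrite subTset.
    have HWt : (t < wsum w setT)%R.
      apply: Rnot_le_lt => H; move: ((HX setT).1 H); apply/negP/negPn.
      by apply/existsP; exists e1; rewrite He1 subsetT.
    exists (fun x => match x with inl v => w v | inr _ => 0%R end), (wsum w setT - t)%R.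
    split; first by move=> [v|f]; [apply: Hw | lra].
    split; first lra.
    move=> S; rewrite (gen_cds S He1 Hv1) (wsum_split S (fun _ => erefl)) /=.
    rewrite -noedge_transv -HX (wsum_compl w (Aof S)).
    have ->: wsum (fun v => w v) (Aof S) = wsum w (Aof S) by [].
    split=> ?; lra.
- move=> [w [t [Hw [Ht HS]]]].
  case: (set_0Vmem E) => [E0 | [e0 He0]].
    exists (fun _ => 0%R), 0%R; split; [move=> _; lra| split; [lra|]].
    move=> X; rewrite wsum0; split=> _; last lra.
    by apply/existsPn => e; rewrite E0 inE.
  have [v0 Hv0] : exists v, v \in e0.
    apply/set0Pn; apply/negP => /eqP H; by move: hE; rewrite -H He0.
  have key : forall A : {set V}, transv E A <-> (t <= wsum (fun v => w (inl v)) A)%R.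
    move=> A; rewrite -wsum_SA HS -[X in transv E X](Aof_SA E A).
    case: (set_0Vmem A) => [HA | [a0 Ha0]].
      split.
        by move=> Ht'; have [v] := Ht' e0 He0; rewrite Aof_SA HA inE.
      case/andP=> /domP Hd _.
      have Hn : (inl v0 : si_vertex E) \notin SA E A by rewrite inE HA inE.
      by have [[v|f] Hy _] := Hd _ Hn; move: Hy; rewrite inE ?HA ?inE.
    by rewrite (cds_A (S := SA E A) (a0 := a0)) // Aof_SA.
  exists (fun v => w (inl v)), (wsum (fun v => w (inl v)) setT - t)%R.
  have HX : forall X : {set V}, (wsum (fun v => w (inl v)) X <=
       wsum (fun v => w (inl v)) setT - t)%R <-> ~~ contains_edge E X.
    move=> X; rewrite -[X in contains_edge E X]setCK noedge_transv key.
    rewrite (wsum_compl (fun v => w (inl v)) X); split=> ?; lra.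
  split; first by move=> v; apply: Hw.
  split; last exact: HX.
  have : ~~ contains_edge E set0.
    apply/existsPn => e; apply/negP => /andP[He]; rewrite subset0 => /eqP He'.
    by move: hE; rewrite -He' He.
  by move/HX; rewrite /wsum big_set0; lra.
Qed.
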